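(* Fix $\rho_r\in(0,1)$, $\rho_w\in(0,1/2)$, $\epsilon>0$ with $\rho_r<1-h(\rho_w)-2\epsilon$. Fix a view $V\in\{0,1,?\}^n$ with $\rho_r n$ non-$?$ coordinates and $e\in\{0,1\}^n$ of Hamming weight at most $\rho_w n$. Let $S_r$ consist of $2^{\epsilon n/4}$ independent uniformly random elements of the set of strings consistent with $V$. Then with probability $1-\exp(-\Omega(n^2))$ over the choice of $S_r$, there are at most $O(n^4)\cdot2^{\epsilon n/8}$ elements $x\in S_r$ such that the Hamming ball of radius $\rho_w n$ around $x+e$ contains another element of $S_r$.
   Context: $h$ is the binary entropy function. A string $x$ is consistent with $V=(v_i)$ if $x_i=v_i$ whenever $v_i\ne ?$. *)

(* Defs.v *)
From mathcomp Require Import all_boot.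
From Stdlib Require Import Reals.
Set Implicit Arguments. Unset Strict Implicit. Unset Printing Implicit Defensive.

(* binary strings of length n, and views in {0,1,?}^n (None = ?) *)
Definition bstr (n : nat) := {ffun 'I_n -> bool}.
Definition view (n : nat) := {ffun 'I_n -> option bool}.

Definition consistent n (V : view n) (x : bstr n) : bool :=
  [forall i, if V i is Some b then x i == b else true].

Definition num_revealed n (V : view n) : nat := #|[set i | V i != None]|.

Definition hweight n (x : bstr n) : nat := #|[set i | x i]|.
Definition hdist n (x y : bstr n) : nat := #|[set i | x i != y i]|.
Definition addstr n (x y : bstr n) : bstr n := [ffun i => x i (+) y i].

Definition Rleb (a b : R) : bool := if Rle_dec a b then true else false.

(* a sample S_r of N elements is a function 'I_N -> bstr n (independent draws,
   so repetitions are allowed). *)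
Definition bad_index n N (e : bstr n) (rad : R) (S : {ffun 'I_N -> bstr n})
  (i : 'I_N) : bool :=
  [exists j : 'I_N, (j != i) && Rleb (INR (hdist (addstr (S i) e) (S j))) rad].

Definition num_bad n N (e : bstr n) (rad : R) (S : {ffun 'I_N -> bstr n}) : nat :=
  #|[set i | bad_index e rad S i]|.

(* sample space: N independent uniform draws from the strings consistent with V *)
Definition sample_space n N (V : view n) : {set {ffun 'I_N -> bstr n}} :=
  [set S : {ffun 'I_N -> bstr n} | [forall i, consistent V (S i)]].

Definition prob n N (V : view n) (E : {ffun 'I_N -> bstr n} -> bool) : R :=
  (INR #|[set S in sample_space N V | E S]| / INR #|sample_space N V|)%R.

Definition h2 (p : R) : R :=
  (- p * (ln p / ln 2) - (1 - p) * (ln (1 - p) / ln 2))%R.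

Definition nsamples (eps : R) (n : nat) : nat :=
  Z.to_nat (Int_part (Rpower 2 (eps * INR n / 4))).

(* Main.v *)
From Pilot Require Import Defs.
From mathcomp Require Import all_boot.
From mathcomp Require Import all_algebra Rstruct zify.
From Stdlib Require Import Reals.
From Stdlib Require Import Lra Lia.
Import Pilot.Defs.
Open Scope R_scope.
Set Implicit Arguments. Unset Strict Implicit.
Lemma card_fam (aT rT : finType) (F : aT -> pred rT) :
  #|finfun.family F| = (\prod_(x : aT) #|F x|)%nat.
Proof.
rewrite card_family /image_mem foldr_map -big_enum /=.
elim: (enum _) => [|x s IH]; first by rewrite big_nil.
by rewrite big_cons /= IH cardE.
Qed.

Lemma card_bigcup_le (I T : finType) (P : {pred I}) (A : I -> {set T}) :
  (#|\bigcup_(i in P) A i| <= \sum_(i in P) #|A i|)%nat.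
Proof.
elim/big_rec2: _ => [|i B s _ IH]; first by rewrite cards0.
rewrite cardsU. lia.
Qed.

Lemma greedy N (w : 'I_N -> 'I_N) (d : nat) : forall (t : nat) (Y : {set 'I_N}),
  (forall y, y \in Y -> w y != y) ->
  (forall b, b \in Y -> #|[set y in Y | w y == b]| <= d)%nat ->
  (t * (d + 2) <= #|Y|)%nat ->
  exists T : {set 'I_N}, [/\ T \subset Y, #|T| = t & forall b, b \in T -> w b \notin T].
Proof.
elim=> [|t IH] Y Hw Hf Hc.
  exists set0; split => //; [exact: sub0set | by rewrite cards0 | by move=> b; rewrite inE].
have : (0 < #|Y|)%nat by lia.
case/card_gt0P => b bY.
pose Z := b |: (w b |: [set y in Y | w y == b]).
pose Y' := Y :\: Z.
have cZ : (#|Z| <= d + 2)%nat.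
  rewrite /Z !cardsU1. have := Hf b bY. case: (_ \notin _); case: (_ \notin _); lia.
have cY' : (#|Y| <= #|Y'| + #|Z|)%nat.
  rewrite /Y' cardsD. have : (#|Y :&: Z| <= #|Z|)%nat by apply: subset_leq_card; apply: subsetIr.
  lia.
have sY' : Y' \subset Y by apply: subsetDl.
have Hf' : forall b', b' \in Y' -> (#|[set y in Y' | w y == b']| <= d)%nat.
  move=> b' bY1; apply: leq_trans (Hf b' (subsetP sY' b' bY1)).
  apply: subset_leq_card; apply/subsetP => y; by rewrite !inE => /andP[/andP[_ ->] ->].
have [T' [sT' cT' HT']] := IH Y'
   (fun y yY => Hw y (subsetP sY' y yY)) Hf' ltac:(lia).
have bT' : b \notin T'.
  apply/negP => /(subsetP sT'); by rewrite !inE eqxx.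
exists (b |: T'); split.
- by rewrite subUset sub1set bY (subset_trans sT' sY').
- by rewrite cardsU1 bT' cT'.
- move=> x; rewrite !inE => /orP[/eqP -> | xT].
  + rewrite negb_or (Hw b bY) /=. apply/negP => /(subsetP sT'); by rewrite !inE eqxx orbT.
  + rewrite negb_or (HT' x xT) andbT.
    apply/eqP => Hwx. have := subsetP sT' x xT.
    rewrite !inE Hwx eqxx => /andP[/negP H1 H2]; apply: H1.
    by rewrite H2 !orbT.
Qed.

Lemma choose_T N (w : 'I_N -> 'I_N) (X : {set 'I_N}) (t : nat) :
  (forall y, y \in X -> w y != y) -> (t * (2 * t + 2) <= #|X|)%nat ->
  exists T : {set 'I_N}, [/\ T \subset X, #|T| = t & forall b, b \in T -> w b \notin T].
Proof.
move=> Hw Hc.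
case: (boolP [exists v, 2 * t <= #|[set y in X | w y == v]|])%nat.
- case/existsP => v Hv.
  pose Y := [set y in X | w y == v].
  have sYX : Y \subset X by apply/subsetP => y; rewrite inE => /andP[].
  have HY : (t * (0 + 2) <= #|Y|)%nat by rewrite /Y; lia.
  have HF : forall b, b \in Y -> (#|[set y in Y | w y == b]| <= 0)%nat.
    move=> b bY; rewrite leqn0 cards_eq0; apply/eqP/setP => y; rewrite !inE.
    apply/negP => /andP[/andP[yX /eqP wy] /eqP wyb].
    move: bY; rewrite inE => /andP[bX /eqP wb].
    have := Hw b bX. by rewrite wb -wyb wy eqxx.
  have [T [sT cT HT]] := @greedy N w 0 t Y
     (fun y yY => Hw y (subsetP sYX y yY)) HF HY.
  by exists T; split => //; apply: subset_trans sT sYX.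
- rewrite negb_exists => /forallP Hall.
  have HF : forall b, b \in X -> (#|[set y in X | w y == b]| <= 2 * t)%nat.
    move=> b _; have := Hall b; rewrite -ltnNge. lia.
  exact: (@greedy N w (2 * t) t X Hw HF ltac:(lia)).
Qed.

Lemma RlebE a b : Defs.Rleb a b = true <-> (a <= b)%R.
Proof. rewrite /Defs.Rleb; case: Rle_dec => //; split => //. Qed.

Lemma hweight_add n (x y : bstr n) : hweight (addstr x y) = hdist x y.
Proof. apply: eq_card => i; rewrite !inE ffunE. by case: (x i); case: (y i). Qed.

Section Count.
Variables (n N : nat) (e : bstr n) (rad : R) (Cs : {set bstr n}).

Definition Wset : {set bstr n} := [set z | Defs.Rleb (INR (hweight z)) rad].
Definition Omega : {set {ffun 'I_N -> bstr n}} := [set S : {ffun 'I_N -> bstr n} | [forall i, S i \in Cs]].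
Definition validf (t : nat) : {set {ffun 'I_N -> 'I_N}} :=
  [set f : {ffun 'I_N -> 'I_N} | (#|[set i | f i != i]| == t) && [forall i, (f i != i) ==> (f (f i) == f i)]].
Definition Ev (f : {ffun 'I_N -> 'I_N}) : {set {ffun 'I_N -> bstr n}} :=
  [set S : {ffun 'I_N -> bstr n} | (S \in Omega) && [forall i, (f i != i) ==>
      Defs.Rleb (INR (hdist (addstr (S i) e) (S (f i)))) rad]].

Lemma Ev_bound t f : f \in validf t ->
  (#|Ev f| * expn #|Cs| t <= expn #|Wset| t * expn #|Cs| N)%nat.
Proof.
rewrite inE => /andP[/eqP cT /forallP Hff].
pose phi (S : {ffun 'I_N -> bstr n}) : {ffun 'I_N -> bstr n} :=
  [ffun i => if f i != i then addstr (addstr (S i) e) (S (f i)) else S i].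
pose D := fun i => if f i != i then mem Wset else mem Cs.
have inj : injective phi.
  move=> S1 S2 E; apply/ffunP => i.
  have Ei := congr1 (fun g : {ffun 'I_N -> bstr n} => g i) E; rewrite /phi /= !ffunE in Ei.
  case: ifP Ei => [fi Ei | /negbFE fi Ei //].
  have Efi := congr1 (fun g : {ffun 'I_N -> bstr n} => g (f i)) E; rewrite /phi /= !ffunE in Efi.
  move: (Hff i); rewrite fi /= => /eqP ffi.
  rewrite ffi eqxx /= in Efi.
  apply/ffunP => k; have := congr1 (fun g : bstr n => g k) Ei; rewrite !ffunE Efi.
  by case: (S1 i k); case: (S2 i k); case: (e k); case: (S2 (f i) k).
have sub : phi @: Ev f \subset finfun.family D.
  apply/subsetP => _ /imsetP[S SE ->]; apply/familyP => i.
  move: SE; rewrite !inE => /andP[/forallP SO /forallP SR].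
  rewrite /D /phi ffunE; case: ifP => fi.
  - rewrite inE hweight_add. by have := SR i; rewrite fi.
  - exact: SO.
have := subset_leq_card sub.
rewrite card_in_imset; last by move=> x y _ _; apply: inj.
rewrite card_fam (bigID (fun i => f i != i)) /=.
rewrite (eq_bigr (fun _ => #|Wset|)); last by move=> i fi; rewrite /D fi.
rewrite [X in (_ * X)%nat](eq_bigr (fun _ => #|Cs|)); last first.
  by move=> i fi; rewrite /D (negbTE fi).
rewrite !prod_nat_const.
have c1 : #|[pred i | f i != i]| = t by rewrite -cT; apply: eq_card => i; rewrite inE.
have c2 : (#|[pred i | f i != i]| + #|[pred i | ~~ (f i != i)]| = N)%nat.
  by rewrite (cardC [pred i | f i != i]) card_ord.
move=> H.
have c3 : expn #|Cs| N = (expn #|Cs| #|[pred i | f i != i]| * expn #|Cs| #|[pred i | ~~ (f i != i)]|)%nat.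
  by rewrite -expnD c2.
rewrite c3 c1 mulnA.
rewrite [X in (_ <= X)%nat]mulnC mulnA.
rewrite leq_mul2r; apply/orP; right.
rewrite mulnC. by rewrite c1 in H.
Qed.


Lemma validf_card t (i0 : 'I_N) : (#|validf t| <= expn (N * N) t)%nat.
Proof.
pose dec (p : {ffun 'I_t -> 'I_N * 'I_N}) : {ffun 'I_N -> 'I_N} :=
  [ffun i => if [pick k | (p k).1 == i] is Some k then (p k).2 else i].
have sub : validf t \subset [set dec p | p : {ffun 'I_t -> 'I_N * 'I_N}].
  apply/subsetP => f; rewrite inE => /andP[/eqP cT /forallP Hff].
  pose T := [set i | f i != i].
  pose s := enum T.
  have ss : size s = t by rewrite /s -cardE.
  apply/imsetP.
  exists [ffun k : 'I_t => (nth i0 s k, f (nth i0 s k))]; first by [].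
  apply/ffunP => i; rewrite ffunE.
  case: pickP => [k /eqP | Hn].
  - by rewrite ffunE /= => <-.
  - case: (eqVneq (f i) i) => [// | fi].
    have iT : i \in s by rewrite /s mem_enum inE fi.
    have ik : (index i s < t)%nat by rewrite -ss index_mem.
    have := Hn (Ordinal ik). rewrite ffunE /= nth_index //. by rewrite eqxx.
apply: leq_trans (subset_leq_card sub) _.
apply: leq_trans (leq_imset_card _ _) _.
by rewrite card_ffun card_prod !card_ord.
Qed.

Lemma bad_bound t (i0 : 'I_N) :
  (#|[set S in Omega | (t * (2 * t + 2) <= num_bad e rad S)%nat]| * expn #|Cs| t
     <= expn (N * N) t * expn #|Wset| t * expn #|Cs| N)%nat.
Proof.
have sub : [set S in Omega | (t * (2 * t + 2) <= num_bad e rad S)%nat]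
   \subset \bigcup_(f in validf t) Ev f.
  apply/subsetP => S; rewrite inE => /andP[SO Hb].
  pose X := [set i | bad_index e rad S i].
  pose w := fun i : 'I_N => odflt i [pick j | (j != i) &&
                 Defs.Rleb (INR (hdist (addstr (S i) e) (S j))) rad].
  have Hw : forall i, i \in X -> (w i != i) &&
                 Defs.Rleb (INR (hdist (addstr (S i) e) (S (w i)))) rad.
    move=> i; rewrite inE /bad_index /w => /existsP [j Hj].
    case: pickP => [k Hk // | Hn]. by rewrite Hn in Hj.
  have [T [sT cT HT]] := @choose_T N w X t
     (fun y yX => proj1 (andP (Hw y yX))) Hb.
  apply/bigcupP.
  exists [ffun i => if i \in T then w i else i].
  - rewrite inE; apply/andP; split.
    + apply/eqP; rewrite -cT; apply: eq_card => i; rewrite !inE ffunE.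
      case: ifP => iT; last by rewrite eqxx.
      by case/andP: (Hw i (subsetP sT i iT)).
    + apply/forallP => i; rewrite !ffunE; case: ifP => iT; last by rewrite eqxx.
      by rewrite (negbTE (HT i iT)) eqxx implybT.
  - rewrite inE SO /=; apply/forallP => i; rewrite ffunE.
    case: ifP => iT; last by rewrite eqxx.
    by case/andP: (Hw i (subsetP sT i iT)) => _ ->; rewrite implybT.
apply: leq_trans (leq_mul (subset_leq_card sub) (leqnn _)) _.
apply: leq_trans (leq_mul (card_bigcup_le _ _) (leqnn _)) _.
rewrite big_distrl /=.
apply: (@leq_trans (\sum_(f in validf t) (expn #|Wset| t * expn #|Cs| N))%nat).
  by apply: leq_sum => f Hf; exact: Ev_bound Hf.
rewrite sum_nat_const -mulnA.
apply: leq_mul => //. exact: validf_card.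
Qed.

End Count.

Definition consset n (V : view n) : {set bstr n} := [set x | consistent V x].

Lemma card_consset n (V : view n) :
  #|consset V| = expn 2 (n - num_revealed V).
Proof.
pose F := fun i : 'I_n => if V i is Some b then pred1 b else predT.
have -> : #|consset V| = #|finfun.family F|.
  apply: eq_card => x; rewrite inE; apply/forallP/familyP => H i;
  have := H i; rewrite /F; case: (V i) => //= b; by rewrite inE.
rewrite card_fam.
rewrite (bigID (fun i => V i == None)) /=.
rewrite (eq_bigr (fun _ => 2%nat)); last first.
  by move=> i /eqP; rewrite /F => ->; rewrite card_bool.
rewrite [X in (_ * X)%nat](eq_bigr (fun _ => 1%nat)); last first.
  move=> i; rewrite /F; case: (V i) => //= b _. by rewrite card1.
rewrite prod_nat_const prod_nat_const exp1n muln1.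
congr (expn _ _).
rewrite /num_revealed.
transitivity #|[pred i : 'I_n | V i == None]|; first by apply: eq_card.
have H := cardC [pred i : 'I_n | V i == None].
have E : #|[set i | V i != None]| = #|[predC [pred i : 'I_n | V i == None]]|.
  by apply: eq_card => i; rewrite !inE.
rewrite E.
have : (#|[pred i : 'I_n | V i == None]| + #|[predC [pred i : 'I_n | V i == None]]| = n)%nat.
  by rewrite H card_ord.
lia.
Qed.

Lemma exp_mono x y : (x <= y -> exp x <= exp y)%R.
Proof. intros [H|H]; [left; apply exp_increasing | right; subst]; auto. Qed.

Section Ent.
Import order.Order.TTheory GRing.Theory Num.Theory.
Local Open Scope ring_scope.
Lemma ball_bound n p : (0 < p < 1/2)%R ->
  (INR #|@Wset n (p * INR n)%R| <= exp (- (INR n * (p * ln p + (1 - p) * ln (1 - p)))))%R.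
Proof.
move=> [p0 p1].
set c := exp (INR n * (p * ln p + (1 - p) * ln (1 - p)))%R.
have c0 : (0 < c)%R by apply exp_pos.
pose phi (z : bstr n) : R := (\prod_(i < n) (if z i then p else 1 - p)).
have phi0 : forall z, (0 <= phi z).
  move=> z; apply: prodr_ge0 => i _; case: (z i).
    by apply/RleP; change (0 <= p)%R; lra.
  by rewrite subr_ge0; apply/RleP; change (p <= 1)%R; lra.
have key2 : (\sum_(z : bstr n) phi z = 1).
  rewrite /phi -(bigA_distr_bigA (fun (i : 'I_n) (j : bool) => if j then p else 1 - p)) /=.
  rewrite (eq_bigr (fun _ => 1%R)) ?prodr_const ?expr1n // => i _.
  by rewrite big_bool /= addrC subrK.
have key1 : forall z, z \in @Wset n (p * INR n)%R -> (c <= phi z).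
  move=> z; rewrite inE => /RlebE Hk.
  rewrite /phi (bigID (fun i => z i)) /=.
  rewrite (eq_bigr (fun _ => p)) ?prodr_const; last by move=> i ->.
  rewrite [X in (_ * X)](eq_bigr (fun _ => 1 - p)) ?prodr_const; last first.
    by move=> i /negbTE ->.
  have cC := cardC [pred i : 'I_n | z i].
  rewrite card_ord in cC.
  set k := #|[pred i | z i]| in cC *.
  have kE : INR k = INR (hweight z) by rewrite /hweight /k; congr INR; apply: eq_card => i; rewrite inE.
  have -> : #|[pred i | ~~ z i]| = (n - k)%nat.
    have E : #|[pred i | ~~ z i]| = #|[predC [pred i | z i]]| by apply: eq_card => i; rewrite !inE.
    by rewrite E -[in RHS]cC addKn.
  rewrite -!RpowE.
  apply/RleP.
  change (c <= p ^ k * (1 - p) ^ (n - k))%R.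
  have q0 : (0 < 1 - p)%R by lra.
  rewrite -(exp_ln (p ^ k)); last by apply: pow_lt.
  rewrite -(exp_ln ((1 - p) ^ (n - k))); last by apply: pow_lt.
  rewrite -exp_plus !ln_pow //.
  rewrite /c.
  have kn : (k <= n)%nat by lia.
  rewrite minus_INR; last by apply/ssrnat.leP.
  rewrite kE.
  have lpq : (ln p < ln (1 - p))%R by apply: ln_increasing => //; lra.
  apply: exp_mono. nra.
set W := @Wset n (p * INR n)%R.
have S1 : \sum_(z in W) c <= \sum_z phi z.
  rewrite [X in _ <= X](bigID (fun z => z \in W)) /=.
  apply: le_trans (_ : _ <= \sum_(z in W) phi z) _.
  - by apply: ler_sum => z zW; exact: key1 z zW.
  - by rewrite lerDl; apply: sumr_ge0 => z _; exact: phi0 z.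
rewrite key2 sumr_const -mulr_natr -INRE in S1.
move/RleP: S1 => S1.
change (c * INR #|W| <= 1)%R in S1.
rewrite exp_Ropp -/c.
have := Rinv_r c ltac:(lra).
have := Rinv_0_lt_compat c c0.
nra.
Qed.
End Ent.


Lemma expn_pow m k : expn m k = Nat.pow m k.
Proof. elim: k => // k IH; by rewrite expnS IH /= multE. Qed.

Lemma INR_expn m k : INR (expn m k) = INR m ^ k.
Proof. by rewrite expn_pow pow_INR. Qed.

Lemma INR_muln a b : INR (a * b)%nat = INR a * INR b.
Proof. by rewrite -multE mult_INR. Qed.

Lemma exp_INR_mul k x : exp (INR k * x) = exp x ^ k.
Proof.
elim: k => [|k IH]; first by rewrite /= Rmult_0_l exp_0.
rewrite S_INR /= -IH -exp_plus; congr exp; ring.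
Qed.

Lemma INR_nsamples_le x : 0 <= x -> INR (Z.to_nat (Int_part x)) <= x.
Proof.
move=> x0; have [H1 _] := base_Int_part x.
move: H1; case: (Int_part x) => [|q|q] /= H1.
- lra.
- by rewrite INR_IPR.
- lra.
Qed.

Lemma card_Omega n N (Cs : {set bstr n}) : #|Omega N Cs| = expn #|Cs| N.
Proof.
have -> : #|Omega N Cs| = #|finfun.family (fun _ : 'I_N => mem Cs)|.
  apply: eq_card => S; rewrite inE; apply/forallP/familyP => H i; exact: H i.
by rewrite card_fam prod_nat_const card_ord.
Qed.

Theorem lemma4p9 (rho_r rho_w eps : R) :
  0 < rho_r < 1 -> 0 < rho_w < 1/2 -> 0 < eps ->
  rho_r < 1 - h2 rho_w - 2 * eps ->
  exists (c K : R) (n0 : nat), 0 < c /\ 0 < K /\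
  forall (n : nat) (V : view n) (e : bstr n),
    (n0 <= n)%nat ->
    INR (num_revealed V) = rho_r * INR n ->
    INR (hweight e) <= rho_w * INR n ->
    prob V (fun S : {ffun 'I_(nsamples eps n) -> bstr n} =>
              Rleb (INR (num_bad e (rho_w * INR n) S))
                   (K * INR n ^ 4 * Rpower 2 (eps * INR n / 8)))
    >= 1 - exp (- c * INR n ^ 2).
Proof.
move=> [r0 r1] [w0 w1] e0 Hrho.
have ln2 : 0 < ln 2 by have := ln_lt_2; lra.
exists (eps * ln 2), 4, 1%nat.
split; first nra. split; first lra.
move=> n V e Hn Hr He.
set N := nsamples eps n.
set rad := rho_w * INR n.
set Cs := consset V.
set W := Wset n rad.
set M := 4 * INR n ^ 4 * Rpower 2 (eps * INR n / 8).
set Bad := [set S in Omega N Cs | (n * (2 * n + 2) <= num_bad e rad S)%nat].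
have n1 : 1 <= INR n by apply: (le_INR 1); apply/ssrnat.leP.
have SO : sample_space N V = Omega N Cs.
  by apply/setP => S; rewrite !inE; apply: eq_forallb => i; rewrite inE.
have HB : (#|Bad| * expn #|Cs| n <= expn (N * N) n * expn #|W| n * expn #|Cs| N)%nat.
  case: (posnP N) => [N0 | Npos]; last exact: (bad_bound e rad Cs n (Ordinal Npos)).
  suff -> : #|Bad| = 0%nat by [].
  apply/eqP; rewrite cards_eq0; apply/eqP/setP => S; rewrite !inE.
  apply/negP => /andP[_ Hb].
  have : (num_bad e rad S <= #|'I_N|)%nat by apply: max_card.
  rewrite card_ord. lia.
have HM : INR (n * (2 * n + 2)) <= M.
  rewrite /M INR_muln plus_INR INR_muln.
  have : 1 <= Rpower 2 (eps * INR n / 8).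
    rewrite /Rpower -exp_0; apply: exp_mono.
    have := pos_INR n => ?.
    apply: Rmult_le_pos; last lra. rewrite /Rdiv. apply: Rmult_le_pos; [nra|lra].
  move=> H1; simpl INR.
  have : 2 * INR n ^ 2 + 2 * INR n <= 4 * INR n ^ 4.
    have a1 : INR n <= INR n * INR n by nra.
    have a2 : INR n * INR n <= (INR n * INR n) * (INR n * INR n) by nra.
    simpl; nra.
  nra.
have Hpart : (#|Omega N Cs| <= #|[set S in sample_space N V |
     Defs.Rleb (INR (num_bad e rad S)) M]| + #|Bad|)%nat.
  rewrite SO.
  set G := [set S in Omega N Cs | Defs.Rleb (INR (num_bad e rad S)) M].
  have : Omega N Cs \subset G :|: Bad.
    apply/subsetP => S SO'; rewrite in_setU; apply/orP.
    case E: (Defs.Rleb (INR (num_bad e rad S)) M).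
      by left; rewrite /G in_set SO' E.
    right; rewrite /Bad in_set SO' /=.
    have HE : M < INR (num_bad e rad S).
      apply: Rnot_le_lt => H. by move/RlebE: H; rewrite E.
    have := INR_lt _ _ (Rle_lt_trans _ _ _ HM HE).
    move/ssrnat.ltP => H; apply: ltnW H.
  move/subset_leq_card; rewrite cardsU. lia.
rewrite /prob.
set G := [set S in sample_space N V | _].
set Nr := INR N. set Wr := INR #|W|. set Cr := INR #|Cs|.
have rn : (num_revealed V <= n)%nat.
  by rewrite /num_revealed; apply: leq_trans (max_card _) _; rewrite card_ord.
have cCs : #|Cs| = expn 2 (n - num_revealed V) by apply: card_consset.
have CrE : Cr = exp ((INR n - rho_r * INR n) * ln 2).
  rewrite /Cr cCs INR_expn -Hr -minus_INR; last by apply/ssrnat.leP.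
  rewrite exp_INR_mul exp_ln; last lra.
  by have -> : INR 2 = 2 by simpl; lra.
have Cr0 : 0 < Cr by rewrite CrE; apply: exp_pos.
have Nr0 : 0 <= Nr by apply: pos_INR.
have Wr0 : 0 <= Wr by apply: pos_INR.
have NrB : Nr <= exp (eps * INR n / 4 * ln 2).
  apply: INR_nsamples_le. rewrite /Rpower. apply: Rlt_le; apply: exp_pos.
have WrB : Wr <= exp (INR n * h2 rho_w * ln 2).
  have := @ball_bound n rho_w (conj w0 w1) => H.
  apply: Rle_trans H (Req_le _ _ _). congr exp.
  rewrite /h2; field. lra.
set E1 := exp (- (eps * ln 2) * INR n).
have key : Nr * Nr * Wr <= E1 * Cr.
  apply: Rle_trans (_ : exp (eps * INR n / 4 * ln 2) * exp (eps * INR n / 4 * ln 2)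
                         * exp (INR n * h2 rho_w * ln 2) <= _).
    apply: Rmult_le_compat => //; first by apply: Rmult_le_pos.
    by apply: Rmult_le_compat.
  rewrite /E1 CrE -!exp_plus; apply: exp_mono.
  have : 0 <= INR n * ln 2 by nra.
  have : 0 < 1 - h2 rho_w - 2 * eps - rho_r by lra.
  nra.
have HB' : INR #|Bad| * Cr ^ n <= (Nr * Nr * Wr) ^ n * Cr ^ N.
  have := le_INR _ _ (ssrnat.leP HB).
  by rewrite !INR_muln !INR_expn INR_muln -Rpow_mult_distr.
have HB2 : INR #|Bad| <= E1 ^ n * Cr ^ N.
  have Hp : (Nr * Nr * Wr) ^ n <= (E1 * Cr) ^ n.
    apply: pow_incr; split => //; apply: Rmult_le_pos => //; exact: Rmult_le_pos.
  have Crn : 0 < Cr ^ n by apply: pow_lt.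
  have CrN : 0 < Cr ^ N by apply: pow_lt.
  apply: (Rmult_le_reg_r (Cr ^ n)) => //.
  apply: Rle_trans HB' _.
  have HCN : 0 <= Cr ^ N by lra.
  replace (E1 ^ n * Cr ^ N * Cr ^ n) with ((E1 ^ n * Cr ^ n) * Cr ^ N) by ring.
  rewrite -Rpow_mult_distr; by apply: Rmult_le_compat_r.
have OE : INR #|sample_space N V| = Cr ^ N by rewrite SO card_Omega INR_expn.
have Hp' := le_INR _ _ (ssrnat.leP Hpart).
rewrite plus_INR -SO OE in Hp'.
have Hp'' : Cr ^ N <= INR #|G| + INR #|Bad| by exact: Hp'.
have EE : exp (- (eps * ln 2) * INR n ^ 2) = E1 ^ n.
  rewrite /E1 -exp_INR_mul; congr exp; ring.
rewrite OE EE.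
have CrN : 0 < Cr ^ N by apply: pow_lt.
apply: Rle_ge.
have : (1 - E1 ^ n) * Cr ^ N <= INR #|G| by nra.
move=> H; rewrite /Rdiv.
apply: Rle_trans (_ : (1 - E1 ^ n) * Cr ^ N * / Cr ^ N <= _).
  rewrite Rmult_assoc Rinv_r; lra.
apply: Rmult_le_compat_r => //. apply: Rlt_le; exact: Rinv_0_lt_compat.
Qed.
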